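(* For all $M,N\in\Lambda^{001}$, if $M\longrightarrow_\beta^* N$ then $\mathcal T(M)\mathrel{\widetilde{\longrightarrow}_r^*}\mathcal T(N)$.
   Context: Fix a set $\mathcal V$ of variables. A 001-infinitary λ-term is a possibly infinite tree built from variables $x\in\mathcal V$, abstractions $\lambda x.M$ and applications $(M)N$ ($N$ the argument), such that every infinite branch enters infinitely often the argument position of an application node; $\Lambda^{001}$ denotes the set of such terms, up to α-equivalence, with fresh variables always available. $M[N/x]$ is capture-avoiding substitution (defined corecursively). One-step β-reduction $\longrightarrow_\beta$ is the contextual closure (under abstractions and on both sides of applications, each step with a finite derivation) of $(\lambda x.M)N\longrightarrow_\beta M[N/x]$; $\longrightarrow_\beta^*$ is its reflexive-transitive closure. Resource terms: $s::=x\mid\lambda x.s\mid\langle s\rangle\bar t$, $\bar t=[t_1,\dots,t_n]$ a finite multiset of resource terms. Finite sums are finite sets of resource terms written additively ($0$ empty), constructors extended by linearity. Resource substitution $s\langle\bar t/x\rangle$ is the sum over $\sigma\in\mathfrak S_n$ of the terms obtained by substituting $t_{\sigma(i)}$ for the $i$-th free occurrence of $x$ in $s$, if $x$ has exactly $n$ free occurrences in $s$, and $0$ otherwise. Simple resource reduction $\longmapsto_r$ is the least relation from terms (resp. monomials) to finite sums containing $\langle\lambda x.s\rangle\bar t\longmapsto_r s\langle\bar t/x\rangle$ and closed under abstraction, the function and argument positions of application, and elements of monomials ($s\longmapsto_r S\Rightarrow s\cdot\bar t\longmapsto_r S\cdot\bar t$). On finite sums, $\sum_{i=0}^n s_i\longrightarrow_r\sum_{i=0}^n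 T_i$ whenever $s_0\longmapsto_r T_0$ and for $1\le i\le n$ either $s_i\longmapsto_r T_i$ or $T_i=s_i$; $\longrightarrow_r^*$ is the reflexive-transitive closure. For possibly infinite sets $\mathcal S,\mathcal S'$ of resource terms, $\mathcal S\mathrel{\widetilde{\longrightarrow}_r^*}\mathcal S'$ means: there exist an index set $I$, resource terms $s_i$ and finite sums $S'_i$ ($i\in I$) with $\mathcal S=\{s_i : i\in I\}$, $\mathcal S'=\bigcup_{i\in I}S'_i$ and $s_i\longrightarrow_r^* S'_i$ for all $i$. Taylor approximation $\ltimes$ is defined inductively by $x\ltimes x$; $s\ltimes M\Rightarrow\lambda x.s\ltimes\lambda x.M$; ($s\ltimes M$ and $t_i\ltimes N$ for all $i$) $\Rightarrow\langle s\rangle[t_1,\dots,t_n]\ltimes(M)N$; $\mathcal T(M)=\{s : s\ltimes M\}$. *)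

(* Defs.v *)
From Stdlib Require Import List Permutation Relations Arith.
Import ListNotations.

CoInductive term : Type :=
| var : nat -> term
| lam : term -> term
| app : term -> term -> term.   (* app M N = (M)N, N in argument position *)

CoInductive bisim : term -> term -> Prop :=
| bisim_var n : bisim (var n) (var n)
| bisim_lam M M' : bisim M M' -> bisim (lam M) (lam M')
| bisim_app M M' N N' : bisim M M' -> bisim N N' -> bisim (app M N) (app M' N').

(* 001 condition: every infinite branch enters the argument position of an
   application infinitely often, i.e. nu X. mu Y. var | lam Y | app Y X *)
Inductive ev001 (P : term -> Prop) : term -> Prop :=
| ev001_var n : ev001 P (var n)
| ev001_lam M : ev001 P M -> ev001 P (lam M)
| ev001_app M N : ev001 P M -> P N -> ev001 P (app M N).

CoInductive is001 : term -> Prop :=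
| is001_intro M : ev001 is001 M -> is001 M.

Definition uprn (r : nat -> nat) (n : nat) : nat :=
  match n with 0 => 0 | S m => S (r m) end.

CoFixpoint tren (r : nat -> nat) (M : term) : term :=
  match M with
  | var n => var (r n)
  | lam M => lam (tren (uprn r) M)
  | app M N => app (tren r M) (tren r N)
  end.

Definition up (s : nat -> term) (n : nat) : term :=
  match n with 0 => var 0 | S m => tren S (s m) end.

CoFixpoint tsubst (s : nat -> term) (M : term) : term :=
  match M with
  | var n => s n
  | lam M => lam (tsubst (up s) M)
  | app M N => app (tsubst s M) (tsubst s N)
  end.

Definition subst0 (N : term) (n : nat) : term :=
  match n with 0 => N | S m => var m end.

Inductive beta_step : term -> term -> Prop :=
| beta_root M N : beta_step (app (lam M) N) (tsubst (subst0 N) M)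
| beta_lam M M' : beta_step M M' -> beta_step (lam M) (lam M')
| beta_appl M M' N : beta_step M M' -> beta_step (app M N) (app M' N)
| beta_appr M N N' : beta_step N N' -> beta_step (app M N) (app M N').

(* reduction on Lambda^001, trees considered up to extensional equality *)
Definition beta_rel (M N : term) : Prop :=
  is001 M /\ is001 N /\ (bisim M N \/ beta_step M N).

Definition beta_star : term -> term -> Prop := clos_refl_trans term beta_rel.

Inductive rterm : Type :=
| rvar : nat -> rterm
| rlam : rterm -> rterm
| rapp : rterm -> list rterm -> rterm.  (* bags = lists up to permutation *)

Inductive requiv : rterm -> rterm -> Prop :=
| rq_var n : requiv (rvar n) (rvar n)
| rq_lam s s' : requiv s s' -> requiv (rlam s) (rlam s')
| rq_app s s' b b1 b' :
    requiv s s' -> Permutation b b1 -> Forall2 requiv b1 b' ->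
    requiv (rapp s b) (rapp s' b').

Fixpoint rren (r : nat -> nat) (s : rterm) : rterm :=
  match s with
  | rvar n => rvar (r n)
  | rlam s => rlam (rren (uprn r) s)
  | rapp s b => rapp (rren r s) (map (rren r) b)
  end.

Fixpoint occ (k : nat) (s : rterm) : nat :=
  match s with
  | rvar n => if Nat.eqb n k then 1 else 0
  | rlam s => occ (S k) s
  | rapp s b =>
      occ k s + (fix occb (b : list rterm) : nat :=
                   match b with nil => 0 | t :: b => occ k t + occb b end) b
  end.

(* replace successive free occurrences of index k (the binder being
   removed) by the successive elements of l; other indices above k are
   decremented. *)
Fixpoint fill (k : nat) (s : rterm) (l : list rterm) : rterm * list rterm :=
  match s with
  | rvar n =>
      if Nat.eqb n k then
        match l with
        | t :: l' => (rren (fun i => i + k) t, l')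
        | nil => (rvar n, nil)
        end
      else (rvar (if Nat.ltb n k then n else pred n), l)
  | rlam s => let (s', l') := fill (S k) s l in (rlam s', l')
  | rapp s b =>
      let (s', l1) := fill k s l in
      let (b', l2) :=
        (fix fillb (b : list rterm) (l : list rterm) : list rterm * list rterm :=
           match b with
           | nil => (nil, l)
           | t :: b => let (t', l1) := fill k t l in
                       let (b', l2) := fillb b l1 in (t' :: b', l2)
           end) b l1 in
      (rapp s' b', l2)
  end.

Section Perms.
Context {A : Type}.
Fixpoint inserts (x : A) (l : list A) : list (list A) :=
  match l with
  | nil => [[x]]
  | y :: l' => (x :: y :: l') :: map (cons y) (inserts x l')
  end.
Fixpoint perms (l : list A) : list (list A) :=
  match l with
  | nil => [nil]
  | x :: l' => flat_map (inserts x) (perms l')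
  end.
End Perms.

(* finite sums: lists read as finite sets of resource terms (mod requiv) *)
Definition rsum := list rterm.

Definition rsubst (s : rterm) (b : list rterm) : rsum :=
  if Nat.eqb (occ 0 s) (length b)
  then map (fun l => fst (fill 0 s l)) (perms b)
  else nil.

Definition sum_mem (u : rterm) (S : rsum) : Prop :=
  exists v, In v S /\ requiv u v.

Definition sum_eq (S T : rsum) : Prop :=
  forall u, sum_mem u S <-> sum_mem u T.

Inductive rstep : rterm -> rsum -> Prop :=
| rs_beta s b : rstep (rapp (rlam s) b) (rsubst s b)
| rs_lam s S : rstep s S -> rstep (rlam s) (map rlam S)
| rs_appl s b S : rstep s S -> rstep (rapp s b) (map (fun s' => rapp s' b) S)
| rs_appr s b B : mstep b B -> rstep (rapp s b) (map (rapp s) B)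
with mstep : list rterm -> list (list rterm) -> Prop :=
| ms_elt l1 t l2 S :
    rstep t S -> mstep (l1 ++ t :: l2) (map (fun t' => l1 ++ t' :: l2) S).

Definition rstepq (s : rterm) (S : rsum) : Prop :=
  exists s' S', requiv s s' /\ rstep s' S' /\ sum_eq S S'.

(* reduction on finite sums: sum_{i=0}^n s_i -> sum_i T_i (s_i distinct) *)
Definition sstep (S T : rsum) : Prop :=
  exists ps : list (rterm * rsum),
    sum_eq S (map fst ps) /\
    sum_eq T (flat_map snd ps) /\
    ForallOrdPairs (fun p q => ~ requiv (fst p) (fst q)) ps /\
    Forall (fun p => rstepq (fst p) (snd p) \/ snd p = [fst p]) ps /\
    Exists (fun p => rstepq (fst p) (snd p)) ps.

Definition rstar : rsum -> rsum -> Prop :=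
  clos_refl_trans rsum (fun S T => sum_eq S T \/ sstep S T).

Definition rstar_inf (A B : rterm -> Prop) : Prop :=
  exists (I : Type) (s : I -> rterm) (S' : I -> rsum),
    (forall u, A u <-> exists i, requiv u (s i)) /\
    (forall u, B u <-> exists i, sum_mem u (S' i)) /\
    (forall i, rstar [s i] (S' i)).

Inductive taylor : rterm -> term -> Prop :=
| ty_var n : taylor (rvar n) (var n)
| ty_lam s M : taylor s M -> taylor (rlam s) (lam M)
| ty_app s b M N :
    taylor s M -> Forall (fun t => taylor t N) b -> taylor (rapp s b) (app M N).

Definition Taylor (M : term) : rterm -> Prop := fun s => taylor s M.

(* Main.v *)
Require Import Defs.
From Stdlib Require Import List Permutation Relations Arith Lia Classical.
Import ListNotations.


Fixpoint rterm_ind' (P : rterm -> Prop) (Hv : forall n, P (rvar n))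
  (Hl : forall s, P s -> P (rlam s))
  (Ha : forall s b, P s -> Forall P b -> P (rapp s b)) (s : rterm) : P s :=
  match s with
  | rvar n => Hv n
  | rlam s => Hl s (rterm_ind' P Hv Hl Ha s)
  | rapp s b => Ha s b (rterm_ind' P Hv Hl Ha s)
      ((fix F (b : list rterm) : Forall P b :=
          match b with nil => Forall_nil _ | t :: b => Forall_cons _ (rterm_ind' P Hv Hl Ha t) (F b) end) b)
  end.

Lemma Forall2_perm {A B} (R : A -> B -> Prop) x0 y z :
  Forall2 R x0 y -> Permutation y z -> exists w, Permutation x0 w /\ Forall2 R w z.
Proof.
  intros H HP. revert x0 H. induction HP; intros x0 H.
  - inversion H; subst. exists []. split; constructor.
  - inversion H as [|a b la lb Hab Hl]; subst. destruct (IHHP _ Hl) as [w [P1 F1]].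
    exists (a :: w). split; constructor; auto.
  - inversion H as [|a b la lb Hab Hl]; subst. inversion Hl as [|a2 b2 la2 lb2 Hab2 Hl2]; subst.
    exists (a2 :: a :: la2). split. apply perm_swap. repeat constructor; auto.
  - destruct (IHHP1 _ H) as [w [P1 F1]]. destruct (IHHP2 _ F1) as [w2 [P2 F2]].
    exists w2. split; auto. eapply perm_trans; eauto.
Qed.

Lemma requiv_refl : forall s, requiv s s.
Proof.
  apply rterm_ind'; intros.
  - constructor.
  - constructor; auto.
  - apply rq_app with (b1:=b); [auto|apply Permutation_refl|].
    induction H0; constructor; auto.
Qed.

Lemma requiv_sym : forall s s', requiv s s' -> requiv s' s.
Proof.
  intro s; induction s using rterm_ind'; intros s' HR; inversion HR; subst.
  - constructor.
  - constructor; auto.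
  - assert (HF: Forall (fun s => forall s', requiv s s' -> requiv s' s) b1)
      by (eapply Permutation_Forall; eauto).
    assert (F: Forall2 requiv b' b1).
    { match goal with H: Forall2 requiv b1 b' |- _ => clear - HF H; induction H end;
        constructor; inversion HF; subst; auto. }
    match goal with H: Permutation b b1 |- _ =>
      destruct (Forall2_perm _ _ _ _ F (Permutation_sym H)) as [w [P1 F1]] end.
    econstructor; eauto.
Qed.

Lemma requiv_trans : forall s s' s'', requiv s s' -> requiv s' s'' -> requiv s s''.
Proof.
  intro s; induction s using rterm_ind'; intros s' s'' H1 H2; inversion H1; subst; inversion H2; subst.
  - constructor.
  - constructor; eauto.
  - match goal with HB: Forall _ b |- _ => rename HB into IHb end.
    match goal with H: Permutation b b1 |- _ => rename H into Pb end.
    match goal with H: Forall2 requiv b1 b' |- _ => rename H into Fb end.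
    match goal with H: Permutation b' ?x |- _ => rename H into Pb' end.
    rename H10 into Fb'.
    assert (HF: Forall (fun s => forall s' s'', requiv s s' -> requiv s' s'' -> requiv s s'') b1)
      by (eapply Permutation_Forall; eauto).
    destruct (Forall2_perm _ _ _ _ Fb Pb') as [w [P1 F1]].
    assert (HW: Forall (fun s => forall s' s'', requiv s s' -> requiv s' s'' -> requiv s s'') w)
      by (eapply Permutation_Forall; eauto).
    econstructor. eauto. eapply perm_trans; eauto.
    clear - HW F1 Fb'. revert b'0 Fb'. induction F1; intros b'' HH; inversion HH; subst; constructor;
      inversion HW; subst; eauto.
Qed.

Lemma taylor_requiv : forall s M s', taylor s M -> requiv s s' -> taylor s' M.
Proof.
  intro s; induction s using rterm_ind'; intros M s' T R; inversion T; subst; inversion R; subst.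
  - constructor.
  - constructor; eauto.
  - match goal with HB: Forall (fun t => taylor t _) b |- _ => rename HB into Tb end.
    rename H into IHb.
    match goal with H: Permutation b b1 |- _ => rename H into Pb end.
    match goal with H: Forall2 requiv b1 _ |- _ => rename H into Fb end.
    constructor; eauto.
    assert (HF: Forall (fun t => taylor t N /\ forall M s', taylor t M -> requiv t s' -> taylor s' M) b1).
    { eapply Permutation_Forall; eauto. clear - IHb Tb. induction IHb; inversion Tb; subst; constructor; auto. }
    clear - HF Fb. induction Fb; inversion HF; subst; constructor; auto.
    match goal with H: _ /\ _ |- _ => destruct H end; eauto.
Qed.

Lemma taylor_requiv' : forall s M s', taylor s M -> requiv s' s -> taylor s' M.
Proof. intros. eapply taylor_requiv; eauto. apply requiv_sym; auto. Qed.

Lemma taylor_bisim : forall s M M', taylor s M -> bisim M M' -> taylor s M'.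
Proof.
  intro s; induction s using rterm_ind'; intros M M' T B; inversion T; subst; inversion B; subst.
  - constructor.
  - constructor; eauto.
  - constructor; eauto. clear - H H4 H6. induction H; inversion H4; subst; constructor; eauto.
Qed.

Lemma taylor_bisim' : forall s M M', taylor s M' -> bisim M M' -> taylor s M.
Proof.
  intro s; induction s using rterm_ind'; intros M M' T B; inversion T; subst; inversion B; subst.
  - constructor.
  - constructor; eauto.
  - constructor; eauto. clear - H H4 H6. induction H; inversion H4; subst; constructor; eauto.
Qed.


Definition tfrob (M : term) : term :=
  match M with var n => var n | lam M => lam M | Defs.app M N => Defs.app M N end.
Lemma tfrob_eq M : M = tfrob M. Proof. destruct M; reflexivity. Qed.

Lemma tren_var r n : tren r (var n) = var (r n).
Proof. rewrite (tfrob_eq (tren r (var n))). reflexivity. Qed.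
Lemma tren_lam r M : tren r (lam M) = lam (tren (uprn r) M).
Proof. rewrite (tfrob_eq (tren r (lam M))). reflexivity. Qed.
Lemma tren_app r M N : tren r (Defs.app M N) = Defs.app (tren r M) (tren r N).
Proof. rewrite (tfrob_eq (tren r (Defs.app M N))). reflexivity. Qed.
Lemma tsubst_var s n : tsubst s (var n) = s n.
Proof. rewrite (tfrob_eq (tsubst s (var n))). simpl. destruct (s n); reflexivity. Qed.
Lemma tsubst_lam s M : tsubst s (lam M) = lam (tsubst (up s) M).
Proof. rewrite (tfrob_eq (tsubst s (lam M))). reflexivity. Qed.
Lemma tsubst_app s M N : tsubst s (Defs.app M N) = Defs.app (tsubst s M) (tsubst s N).
Proof. rewrite (tfrob_eq (tsubst s (Defs.app M N))). reflexivity. Qed.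

Lemma map_Forall_eq {A B} (f g : A -> B) l : Forall (fun x => f x = g x) l -> map f l = map g l.
Proof. induction 1; simpl; f_equal; auto. Qed.

Lemma rren_ext : forall s r r', (forall i, r i = r' i) -> rren r s = rren r' s.
Proof.
  intro s; induction s using rterm_ind'; intros r r' E; simpl.
  - rewrite E; auto.
  - f_equal. apply IHs. intros [|i]; simpl; auto.
  - f_equal; auto. apply map_Forall_eq. revert H. apply Forall_impl. auto.
Qed.

Lemma rren_comp : forall s r r', rren r (rren r' s) = rren (fun i => r (r' i)) s.
Proof.
  intro s; induction s using rterm_ind'; intros r r'; simpl.
  - auto.
  - f_equal. rewrite IHs. apply rren_ext. intros [|i]; simpl; auto.
  - f_equal; auto. rewrite map_map. apply map_Forall_eq. revert H. apply Forall_impl. auto.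
Qed.

Lemma rren_id : forall s, rren (fun i => i) s = s.
Proof.
  intro s; induction s using rterm_ind'; simpl.
  - auto.
  - f_equal. rewrite <- IHs at 2. apply rren_ext. intros [|i]; simpl; auto.
  - f_equal; auto. rewrite <- (map_id b) at 2. apply map_Forall_eq. auto.
Qed.

Lemma taylor_var u n : taylor u (var n) <-> u = rvar n.
Proof. split; intro H. inversion H; auto. subst; constructor. Qed.

Lemma taylor_tren : forall t N r, taylor t N -> taylor (rren r t) (tren r N).
Proof.
  intro t; induction t using rterm_ind'; intros M r T; inversion T; subst; simpl.
  - rewrite tren_var. constructor.
  - rewrite tren_lam. constructor. auto.
  - rewrite tren_app. constructor; auto.
    match goal with H1: Forall (fun t => taylor t _) b |- _ => rename H1 into Tb end.
    clear - H Tb. induction H; inversion Tb; subst; simpl; constructor; auto.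
Qed.

Lemma taylor_tren_inv : forall u N r, taylor u (tren r N) -> exists t, taylor t N /\ u = rren r t.
Proof.
  intro u; induction u using rterm_ind'; intros M r T; destruct M as [m|M|M1 M2];
    try rewrite tren_var in T; try rewrite tren_lam in T; try rewrite tren_app in T;
    inversion T; subst.
  - exists (rvar m). split; constructor.
  - destruct (IHu _ _ H1) as [t [T1 E]]. exists (rlam t). split. constructor; auto. simpl; f_equal; auto.
  - destruct (IHu _ _ H3) as [t [T1 E]].
    assert (exists b0, Forall (fun t => taylor t M2) b0 /\ b = map (rren r) b0) as [b0 [F E2]].
    { clear - H H5. induction H; inversion H5; subst.
      - exists []; auto.
      - destruct IHForall as [b0 [F E]]; auto. destruct (H _ _ H3) as [t0 [T0 E0]].
        exists (t0 :: b0). split. constructor; auto. simpl; f_equal; auto. }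
    exists (rapp t b0). split. constructor; auto. simpl; f_equal; auto.
Qed.

Lemma taylor_tren_iff u N r : taylor u (tren r N) <-> exists t, taylor t N /\ u = rren r t.
Proof. split. apply taylor_tren_inv. intros [t [T E]]; subst; apply taylor_tren; auto. Qed.


Fixpoint occb k (b : list rterm) : nat :=
  match b with nil => 0 | t :: b => occ k t + occb k b end.

Lemma occ_app k s b : occ k (rapp s b) = occ k s + occb k b.
Proof. simpl. f_equal. induction b; simpl; auto. Qed.

Fixpoint fillb k (b : list rterm) (l : list rterm) : list rterm * list rterm :=
  match b with
  | nil => (nil, l)
  | t :: b => let (t', l1) := fill k t l in let (b', l2) := fillb k b l1 in (t' :: b', l2)
  end.

Lemma fill_app k s b l : fill k (rapp s b) l =
  let (s', l1) := fill k s l in let (b', l2) := fillb k b l1 in (rapp s' b', l2).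
Proof.
  simpl. destruct (fill k s l) as [s' l1].
  match goal with |- (let (_,_) := ?F b l1 in _) = _ =>
    assert (E: forall b l, F b l = fillb k b l) end.
  { induction b0; intros; simpl; auto. destruct (fill k a l0). rewrite IHb0. reflexivity. }
  rewrite E. reflexivity.
Qed.

Definition Hk (N : term) (k : nat) (sg : nat -> term) : Prop :=
  (forall n, n < k -> forall u, taylor u (sg n) <-> u = rvar n) /\
  (forall n, k < n -> forall u, taylor u (sg n) <-> u = rvar (n - 1)) /\
  (forall u, taylor u (sg k) <-> exists t, taylor t N /\ u = rren (fun i => i + k) t).

Lemma Hk_up N k sg : Hk N k sg -> Hk N (S k) (up sg).
Proof.
  intros [H1 [H2 H3]]. split; [|split].
  - intros [|m] Hm u; simpl.
    + apply taylor_var.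
    + rewrite taylor_tren_iff. split.
      * intros [t [T E]]. apply (H1 m) in T; [|lia]. subst; reflexivity.
      * intros E; subst. exists (rvar m). split; [apply (H1 m); auto; lia| reflexivity].
  - intros [|m] Hm u; simpl; [lia|].
    rewrite taylor_tren_iff. split.
    + intros [t [T E]]. apply (H2 m) in T; [|lia]. subst; simpl. f_equal. lia.
    + intros E; subst. exists (rvar (m - 1)). split; [apply (H2 m); auto; lia| simpl; f_equal; lia].
  - intros u. simpl. rewrite taylor_tren_iff. split.
    + intros [t [T E]]. apply H3 in T as [t0 [T0 E0]]. subst. exists t0. split; auto.
      rewrite rren_comp. apply rren_ext. intros; lia.
    + intros [t0 [T0 E0]]. subst. exists (rren (fun i => i + k) t0). split.
      apply H3. eauto. rewrite rren_comp. apply rren_ext. intros; lia.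
Qed.

Lemma Hk_0 N : Hk N 0 (subst0 N).
Proof.
  split; [|split].
  - intros; lia.
  - intros [|n] Hn u; [lia|]. simpl. rewrite taylor_var. replace (n - 0) with n by lia. tauto.
  - intros u; simpl. split.
    + intros T. exists u. split; auto. rewrite <- (rren_id u) at 1. apply rren_ext; intros; lia.
    + intros [t [T E]]; subst. rewrite (rren_ext t _ (fun i => i)); [rewrite rren_id; auto| intros; lia].
Qed.

Lemma Forall_app_split {A} (P : A -> Prop) l1 l2 : Forall P (l1 ++ l2) -> Forall P l1 /\ Forall P l2.
Proof. intros H; split; rewrite Forall_forall in *; intros; apply H; apply in_or_app; auto. Qed.

Lemma fill_sound : forall s M, taylor s M -> forall k sg N l l', Hk N k sg ->
  Forall (fun t => taylor t N) l -> length l = occ k s ->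
  exists s', fill k s (l ++ l') = (s', l') /\ taylor s' (tsubst sg M).
Proof.
  intro s; induction s using rterm_ind'; intros M T k sg N l l' HK Fl Ll; inversion T; subst.
  - rewrite tsubst_var. destruct HK as [H1 [H2 H3]]. simpl in Ll |- *.
    destruct (Nat.eqb_spec n k).
    + subst. destruct l as [|t [|]]; simpl in Ll; try lia. simpl.
      inversion Fl; subst. eexists; split; [reflexivity|]. apply H3. eauto.
    + destruct l; simpl in Ll; try lia. simpl. eexists; split; [reflexivity|].
      destruct (Nat.ltb_spec n k).
      * apply H1; auto.
      * apply H2; [lia|]. f_equal; lia.
  - rewrite tsubst_lam. simpl in Ll.
    match goal with HH: taylor s _ |- _ => destruct (IHs _ HH (S k) (up sg) N l l' (Hk_up _ _ _ HK) Fl Ll) as [s' [E T']] end.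
    simpl. rewrite E. eexists; split; [reflexivity|]. constructor; auto.
  - rewrite tsubst_app. rewrite occ_app in Ll. rewrite fill_app.
    rewrite <- (firstn_skipn (occ k s) l) in Fl |- *.
    apply Forall_app_split in Fl as [F1 F2].
    assert (L1: length (firstn (occ k s) l) = occ k s) by (rewrite length_firstn; lia).
    assert (L2: length (skipn (occ k s) l) = occb k b) by (rewrite length_skipn; lia).
    rewrite <- app_assoc.
    match goal with HH: taylor s _ |- _ => destruct (IHs _ HH k sg N _ (skipn (occ k s) l ++ l') HK F1 L1) as [s' [E T']] end.
    rewrite E.
    match goal with HB: Forall (fun t => taylor t _) b |- _ => rename HB into Tb end.
    assert (exists b', fillb k b (skipn (occ k s) l ++ l') = (b', l') /\
                       Forall (fun t => taylor t (tsubst sg N0)) b') as [b' [E2 F']].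
    { revert L2 F2. generalize (skipn (occ k s) l). clear - H Tb HK.
      induction H; intros l2 L2 F2; inversion Tb; subst.
      - destruct l2; simpl in L2; try lia. exists []; auto.
      - simpl in L2. simpl.
        rewrite <- (firstn_skipn (occ k x) l2) in F2 |- *.
        apply Forall_app_split in F2 as [F1 F3].
        rewrite <- app_assoc.
        destruct (H _ H3 k sg N _ (skipn (occ k x) l2 ++ l') HK F1) as [x' [E T']].
        { rewrite length_firstn; lia. }
        rewrite E.
        destruct (IHForall H4 (skipn (occ k x) l2)) as [b' [E' F']]; auto.
        { rewrite length_skipn; lia. }
        rewrite E'. exists (x' :: b'). split; auto. }
    rewrite E2. eexists; split; [reflexivity|]. constructor; auto.
Qed.

Lemma fill_var_case t m k sg N : Hk N k sg -> taylor t (sg m) ->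
  exists s l, taylor s (var m) /\ Forall (fun t => taylor t N) l /\ length l = occ k s /\
    forall l', fill k s (l ++ l') = (t, l').
Proof.
  intros [H1 [H2 H3]] T. exists (rvar m).
  destruct (lt_eq_lt_dec m k) as [[Hl|He]|Hg].
  - apply H1 in T; auto. subst. exists []. repeat split; try constructor.
    simpl. destruct (Nat.eqb_spec m k); [lia|]. reflexivity.
    intros l'; simpl. destruct (Nat.eqb_spec m k); [lia|].
    destruct (Nat.ltb_spec m k); [|lia]. reflexivity.
  - subst. apply H3 in T as [t0 [T0 E]]. subst. exists [t0]. repeat split; try constructor; auto.
    simpl. rewrite Nat.eqb_refl. reflexivity.
    intros l'; simpl. rewrite Nat.eqb_refl. reflexivity.
  - apply H2 in T; auto. subst. exists []. repeat split; try constructor.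
    simpl. destruct (Nat.eqb_spec m k); [lia|]. reflexivity.
    intros l'; simpl. destruct (Nat.eqb_spec m k); [lia|].
    destruct (Nat.ltb_spec m k); [lia|]. f_equal. f_equal. lia.
Qed.

Lemma fill_complete : forall t M k sg N, taylor t (tsubst sg M) -> Hk N k sg ->
  exists s l, taylor s M /\ Forall (fun t => taylor t N) l /\ length l = occ k s /\
    forall l', fill k s (l ++ l') = (t, l').
Proof.
  intro t; induction t using rterm_ind'; intros M k sg N T HK;
    (destruct M as [m|M|M1 M2]; [rewrite tsubst_var in T; eapply fill_var_case; eauto| |]);
    try rewrite tsubst_lam in T; try rewrite tsubst_app in T; inversion T; subst.
  - match goal with HH: taylor t _ |- _ =>
      destruct (IHt _ _ _ _ HH (Hk_up _ _ _ HK)) as [s [l [Ts [Fl [Ll Ef]]]]] end.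
    exists (rlam s), l. repeat split; auto. constructor; auto.
    intros l'; simpl. rewrite Ef. reflexivity.
  - match goal with HH: taylor t _ |- _ =>
      destruct (IHt _ _ _ _ HH HK) as [s [l [Ts [Fl [Ll Ef]]]]] end.
    match goal with HB: Forall (fun t => taylor t _) b |- _ => rename HB into Tb end.
    assert (exists sb lb, Forall (fun t => taylor t M2) sb /\ Forall (fun t => taylor t N) lb /\
               length lb = occb k sb /\ forall l', fillb k sb (lb ++ l') = (b, l'))
      as [sb [lb [Tsb [Flb [Llb Efb]]]]].
    { clear - H Tb HK. induction H; inversion Tb; subst.
      - exists [], []. repeat split; auto.
      - destruct (H _ _ _ _ H3 HK) as [s [l' [Ts [Fl [Ll Ef]]]]].
        destruct (IHForall H4) as [sb [lb [Tsb [Flb [Llb Efb]]]]].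
        exists (s :: sb), (l' ++ lb). repeat split.
        + constructor; auto.
        + apply Forall_app; auto.
        + rewrite length_app. simpl. lia.
        + intros l''. simpl. rewrite <- app_assoc, Ef, Efb. reflexivity. }
    exists (rapp s sb), (l ++ lb). repeat split.
    + constructor; auto.
    + apply Forall_app; auto.
    + rewrite occ_app, length_app. lia.
    + intros l'. rewrite fill_app, <- app_assoc, Ef, Efb. reflexivity.
Qed.


Lemma inserts_perm {A} (a : A) l x : In x (inserts a l) -> Permutation x (a :: l).
Proof.
  revert x; induction l as [|y l IH]; intros x H; simpl in H.
  - destruct H as [H|[]]; subst; auto.
  - destruct H as [H|H]; [subst; auto|].
    apply in_map_iff in H as [x' [E H]]; subst.
    eapply perm_trans. apply perm_skip. apply IH; eauto. apply perm_swap.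
Qed.

Lemma perms_perm {A} (l x : list A) : In x (perms l) -> Permutation x l.
Proof.
  revert x; induction l as [|a l IH]; intros x H; simpl in H.
  - destruct H as [H|[]]; subst; auto.
  - apply in_flat_map in H as [y [Hy Hx]].
    eapply perm_trans. apply inserts_perm; eauto. apply perm_skip; auto.
Qed.

Lemma perms_self {A} (l : list A) : In l (perms l).
Proof.
  induction l as [|a l IH]; simpl; auto.
  apply in_flat_map. exists l. split; auto. destruct l; simpl; auto.
Qed.

Lemma root_sound s0 b M N : taylor s0 M -> Forall (fun t => taylor t N) b ->
  forall y, In y (rsubst s0 b) -> taylor y (tsubst (subst0 N) M).
Proof.
  intros T F y Hy. unfold rsubst in Hy.
  destruct (Nat.eqb_spec (occ 0 s0) (length b)); [|destruct Hy].
  apply in_map_iff in Hy as [l [E Hl]]. subst.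
  apply perms_perm in Hl.
  destruct (fill_sound s0 M T 0 (subst0 N) N l [] (Hk_0 N)) as [s' [E T']].
  - apply Permutation_sym in Hl. eapply Permutation_Forall; eauto.
  - rewrite (Permutation_length Hl). auto.
  - rewrite app_nil_r in E. rewrite E. auto.
Qed.

Lemma root_complete t M N : taylor t (tsubst (subst0 N) M) ->
  exists s0 l, taylor s0 M /\ Forall (fun t => taylor t N) l /\ In t (rsubst s0 l).
Proof.
  intros T. destruct (fill_complete t M 0 (subst0 N) N T (Hk_0 N)) as [s [l [Ts [Fl [Ll Ef]]]]].
  exists s, l. repeat split; auto. unfold rsubst. rewrite Ll, Nat.eqb_refl.
  apply in_map_iff. exists l. split; [|apply perms_self].
  specialize (Ef []). rewrite app_nil_r in Ef. rewrite Ef. reflexivity.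
Qed.


Definition gclosed (g : rterm -> Prop) := forall a b, requiv a b -> g a -> g b.

Inductive Reach (g : rterm -> Prop) : rterm -> Prop :=
| Rg u : g u -> Reach g u
| Rs u T : rstepq u T -> (forall y, In y T -> Reach g y) -> Reach g u.

Inductive RM (g : rterm -> Prop) (t : rterm) : rterm -> Prop :=
| RMg u : g u -> requiv u t -> RM g t u
| RMs u T x : rstepq u T -> (forall y, In y T -> Reach g y) -> In x T -> RM g t x -> RM g t u.

Lemma RM_Reach g t u : RM g t u -> Reach g u.
Proof. induction 1. apply Rg; auto. eapply Rs; eauto. Qed.

Definition ctxok (f : rterm -> rterm) :=
  (forall a a', requiv a a' -> requiv (f a) (f a')) /\
  (forall u T, rstep u T -> rstep (f u) (map f T)).

Lemma sum_eq_map f T T' : (forall a a', requiv a a' -> requiv (f a) (f a')) ->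
  sum_eq T T' -> sum_eq (map f T) (map f T').
Proof.
  intros Hf H u; split; intros [v [Hv R]]; apply in_map_iff in Hv as [x [E Hx]]; subst.
  - destruct (proj1 (H x) (ex_intro _ x (conj Hx (requiv_refl x)))) as [y [Hy Ry]].
    exists (f y); split. apply in_map; auto. eapply requiv_trans; eauto.
  - destruct (proj2 (H x) (ex_intro _ x (conj Hx (requiv_refl x)))) as [y [Hy Ry]].
    exists (f y); split. apply in_map; auto. eapply requiv_trans; eauto.
Qed.

Lemma rstepq_ctx f u T : ctxok f -> rstepq u T -> rstepq (f u) (map f T).
Proof.
  intros [H1 H2] [u' [T' [R [S E]]]]. exists (f u'), (map f T').
  split; [auto|split; [auto|apply sum_eq_map; auto]].
Qed.

Lemma rstepq_requiv x m T : requiv x m -> rstepq m T -> rstepq x T.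
Proof. intros R [u' [T' [R' [S E]]]]. exists u', T'. exact (conj (requiv_trans _ _ _ R R') (conj S E)). Qed.

Lemma Reach_lift g1 g2 f u : ctxok f -> (forall x, g1 x -> Reach g2 (f x)) -> Reach g1 u -> Reach g2 (f u).
Proof.
  intros Hf Hg R. induction R.
  - auto.
  - apply Rs with (map f T). apply rstepq_ctx; auto.
    intros y Hy. apply in_map_iff in Hy as [x [E Hx]]; subst; auto.
Qed.

Lemma RM_lift g1 g2 f t t' u : ctxok f -> (forall x, g1 x -> Reach g2 (f x)) ->
  (forall x, g1 x -> requiv x t -> RM g2 t' (f x)) -> RM g1 t u -> RM g2 t' (f u).
Proof.
  intros Hf Hg Hm R. induction R.
  - auto.
  - apply RMs with (map f T) (f x); auto. apply rstepq_ctx; auto.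
    intros y Hy. apply in_map_iff in Hy as [z [E Hz]]; subst. apply Reach_lift with g1; auto.
    apply in_map; auto.
Qed.

Lemma ctxok_id : ctxok (fun x => x).
Proof. split; auto. intros. rewrite map_id. auto. Qed.

Lemma ctxok_lam : ctxok rlam.
Proof. split. intros; constructor; auto. intros; constructor; auto. Qed.

Lemma F2_refl (l : list rterm) : Forall2 requiv l l.
Proof. induction l; constructor; auto using requiv_refl. Qed.

Lemma ctxok_appl b : ctxok (fun s => rapp s b).
Proof.
  split. intros. apply rq_app with b; auto using Permutation_refl, F2_refl.
  intros. apply rs_appl; auto.
Qed.

Lemma ctxok_bag s0 l1 l2 : ctxok (fun x => rapp s0 (l1 ++ x :: l2)).
Proof.
  split.
  - intros. apply rq_app with (l1 ++ a :: l2); auto using Permutation_refl, requiv_refl.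
    apply Forall2_app; auto using F2_refl.
  - intros u T H. pose proof (rs_appr s0 _ _ (ms_elt l1 u l2 T H)). rewrite map_map in H0. auto.
Qed.

Lemma Reach_graft g1 g2 u : (forall x, g1 x -> Reach g2 x) -> Reach g1 u -> Reach g2 u.
Proof. intros. apply (Reach_lift g1 g2 (fun x => x)); auto using ctxok_id. Qed.

Lemma RM_requiv g t x m : gclosed g -> requiv x m -> RM g t m -> RM g t x.
Proof.
  intros Hg R H. inversion H; subst.
  - apply RMg. eapply Hg; eauto using requiv_sym. eapply requiv_trans; eauto.
  - eapply RMs; eauto. eapply rstepq_requiv; eauto.
Qed.

Lemma RM_graft g1 g2 t m u : gclosed g2 -> (forall x, g1 x -> Reach g2 x) -> RM g1 m u -> RM g2 t m -> RM g2 t u.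
Proof.
  intros Hc Hg R1 R2. apply (RM_lift g1 g2 (fun x => x) m t u); auto using ctxok_id.
  intros; eapply RM_requiv; eauto.
Qed.


Definition sumw {A} (w : A -> nat) (l : list A) : nat := fold_right (fun a acc => w a + acc) 0 l.

Lemma sumw_app {A} (w : A -> nat) l1 l2 : sumw w (l1 ++ l2) = sumw w l1 + sumw w l2.
Proof. induction l1; simpl; auto. rewrite IHl1; lia. Qed.

Lemma dedup {A} (key : A -> rterm) (w : A -> nat) (x : rterm) (l : list A) :
  exists l', (forall a, In a l' -> In a l) /\
    (forall a, In a l -> ~ requiv (key a) x -> exists a', In a' l' /\ requiv (key a) (key a')) /\
    (forall a, In a l' -> ~ requiv (key a) x) /\
    ForallOrdPairs (fun a b => ~ requiv (key a) (key b)) l' /\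
    sumw w l' <= sumw w l /\
    (forall a, In a l -> requiv (key a) x -> sumw w l' + w a <= sumw w l).
Proof.
  induction l as [|y r IH].
  - exists []. split; [intros a []|split; [intros a []|split; [intros a []|split; [constructor|split; [simpl;lia|intros a []]]]]].
  - destruct IH as [r' [H1 [H2 [H3 [H4 [H5 H6]]]]]].
    destruct (classic (requiv (key y) x)) as [Ey|Ny].
    + exists r'. repeat split.
      * intros a Ha; right; auto.
      * intros a [Ha|Ha] Na; subst; [tauto|auto].
      * auto.
      * auto.
      * simpl; lia.
      * intros a [Ha|Ha] Ea; subst; simpl; [lia|]. specialize (H6 a Ha Ea); lia.
    + destruct (classic (exists a', In a' r' /\ requiv (key y) (key a'))) as [Ex|Nx].
      * exists r'. repeat split.
        -- intros a Ha; right; auto.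
        -- intros a [Ha|Ha] Na; subst; auto.
        -- auto.
        -- auto.
        -- simpl; lia.
        -- intros a [Ha|Ha] Ea; subst; simpl; [tauto|]. specialize (H6 a Ha Ea); lia.
      * exists (y :: r'). repeat split.
        -- intros a [Ha|Ha]; [left; auto|right; auto].
        -- intros a [Ha|Ha] Na; subst. exists a; split; [left; auto|apply requiv_refl].
           destruct (H2 a Ha Na) as [a' [Ha' R]]. exists a'; split; [right|]; auto.
        -- intros a [Ha|Ha]; subst; auto.
        -- constructor; auto. apply Forall_forall. intros b Hb R. apply Nx; eauto.
        -- simpl; lia.
        -- intros a [Ha|Ha] Ea; subst; simpl; [tauto|]. specialize (H6 a Ha Ea); lia.
Qed.

Lemma FOP_map {A B} (R : B -> B -> Prop) (f : A -> B) l :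
  ForallOrdPairs (fun a b => R (f a) (f b)) l -> ForallOrdPairs R (map f l).
Proof.
  induction 1; simpl; constructor; auto.
  rewrite Forall_map. auto.
Qed.

Lemma flat_map_single (D : list rterm) : flat_map (fun d => [d]) D = D.
Proof. induction D; simpl; f_equal; auto. Qed.

Lemma sum_eq_refl S : sum_eq S S.
Proof. intro; tauto. Qed.

Lemma sstep_make (C : list rterm) x T D : In x C -> rstepq x T ->
  (forall d, In d D -> In d C) ->
  (forall c, In c C -> ~ requiv c x -> exists d, In d D /\ requiv c d) ->
  (forall d, In d D -> ~ requiv d x) ->
  ForallOrdPairs (fun a b => ~ requiv a b) D -> sstep C (T ++ D).
Proof.
  intros Hx HT H1 H2 H3 H4.
  exists ((x, T) :: map (fun d => (d, [d])) D). repeat split.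
  - intros [v [Hv R]]. simpl. rewrite map_map. simpl. rewrite map_id.
    destruct (classic (requiv v x)) as [E|N].
    + exists x; split; [left; auto|]. eapply requiv_trans; eauto.
    + destruct (H2 v Hv N) as [d [Hd Rd]]. exists d; split; [right; auto|]. eapply requiv_trans; eauto.
  - simpl. rewrite map_map. simpl. rewrite map_id. intros [v [[Hv|Hv] R]]; subst.
    + exists v; auto.
    + exists v; split; auto.
  - simpl. rewrite flat_map_concat_map, map_map. simpl. rewrite <- flat_map_concat_map, flat_map_single.
    intros; tauto.
  - simpl. rewrite flat_map_concat_map, map_map. simpl. rewrite <- flat_map_concat_map, flat_map_single.
    intros; tauto.
  - constructor.
    + rewrite Forall_map. apply Forall_forall. intros d Hd R. apply (H3 d Hd). apply requiv_sym; auto.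
    + apply FOP_map. simpl. auto.
  - constructor. left; auto. rewrite Forall_map. apply Forall_forall. intros; right; reflexivity.
  - constructor. simpl. auto.
Qed.

Inductive ReachN (g : rterm -> Prop) : rterm -> nat -> Prop :=
| RNg u n : g u -> ReachN g u n
| RNs u (ts : list (rterm * nat)) n : rstepq u (map fst ts) ->
    (forall p, In p ts -> ReachN g (fst p) (snd p)) -> sumw snd ts < n -> ReachN g u n.

Lemma Reach_N_list g (T : list rterm) : (forall y, In y T -> exists n, ReachN g y n) ->
  exists ts, map fst ts = T /\ forall p, In p ts -> ReachN g (fst p) (snd p).
Proof.
  induction T as [|y T IH]; intros H.
  - exists []; split; auto. intros p [].
  - destruct (H y (or_introl eq_refl)) as [n Hn]. destruct IH as [ts [E Hts]]; [intros; apply H; right; auto|].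
    exists ((y, n) :: ts). split. simpl; f_equal; auto.
    intros p [Hp|Hp]; subst; auto.
Qed.

Lemma Reach_N g u : Reach g u -> exists n, ReachN g u n.
Proof.
  induction 1.
  - exists 0; apply RNg; auto.
  - destruct (Reach_N_list g T H1) as [ts [E Hts]]. subst.
    exists (S (sumw snd ts)). eapply RNs; eauto.
Qed.

Lemma sum_reach g : gclosed g -> forall n (C : list (rterm * nat)),
  (forall p, In p C -> ReachN g (fst p) (snd p)) -> sumw snd C <= n ->
  exists C', rstar (map fst C) C' /\ (forall y, In y C' -> g y) /\
    (forall t, g t -> sum_mem t (map fst C) -> sum_mem t C').
Proof.
  intros Hg n. induction n as [n IH] using (well_founded_induction lt_wf).
  intros C HC Hn.
  destruct (classic (exists p, In p C /\ ~ g (fst p))) as [[p [Hp Np]]|Hno].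
  - destruct p as [u m]. simpl in Np. pose proof (HC _ Hp) as HR. simpl in HR.
    inversion HR as [u0 m0 Gu|u0 ts m0 Hst Hts Hlt]; subst; [tauto|].
    destruct (dedup fst snd u C) as [D [D1 [D2 [D3 [D4 [D5 D6]]]]]].
    assert (Wt: sumw snd D + m <= sumw snd C) by (apply (D6 (u,m)); auto; apply requiv_refl).
    destruct (IH (sumw snd (ts ++ D))) with (C := ts ++ D) as [C' [R [G P]]].
    + rewrite sumw_app. lia.
    + intros q Hq. apply in_app_or in Hq as [Hq|Hq]; auto.
    + lia.
    + exists C'. split; [|split; auto].
      * eapply rt_trans; [|exact R]. apply rt_step. right.
        rewrite map_app.
        apply sstep_make with (x := u).
        -- apply in_map_iff. exists (u, m); auto.
        -- auto.
        -- intros d Hd. apply in_map_iff in Hd as [q [E Hq]]; subst. apply in_map; auto.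
        -- intros c Hc Nc. apply in_map_iff in Hc as [q [E Hq]]; subst.
           destruct (D2 q Hq Nc) as [q' [Hq' R']]. exists (fst q'); split; auto. apply in_map; auto.
        -- intros d Hd. apply in_map_iff in Hd as [q [E Hq]]; subst. auto.
        -- apply FOP_map; auto.
      * intros t Gt [v [Hv Rv]]. apply P; auto.
        apply in_map_iff in Hv as [q [E Hq]]; subst.
        destruct (classic (requiv (fst q) u)) as [E|N].
        -- exfalso. apply Np. eapply Hg; [|exact Gt]. eapply requiv_trans; eauto.
        -- destruct (D2 q Hq N) as [q' [Hq' R']]. exists (fst q'). split.
           rewrite map_app. apply in_or_app; right. apply in_map; auto.
           eapply requiv_trans; eauto.
  - exists (map fst C). split; [apply rt_refl|split; auto].
    intros y Hy. apply in_map_iff in Hy as [q [E Hq]]; subst.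
    apply NNPP. intro N. apply Hno. eauto.
Qed.

Lemma mark_phase g t u : RM g t u -> forall C, In u C -> (forall y, In y C -> Reach g y) ->
  exists C', rstar C C' /\ (forall y, In y C' -> Reach g y) /\ sum_mem t C'.
Proof.
  induction 1; intros C Hu HC.
  - exists C. split; [apply rt_refl|split; auto]. exists u; split; auto. apply requiv_sym; auto.
  - destruct (dedup (fun x => x) (fun _ => 0) u C) as [D [D1 [D2 [D3 [D4 _]]]]].
    destruct (IHRM (T ++ D)) as [C' [R [G M]]].
    + apply in_or_app; auto.
    + intros y Hy. apply in_app_or in Hy as [Hy|Hy]; auto.
    + exists C'. split; auto. eapply rt_trans; [|exact R]. apply rt_step. right.
      apply sstep_make with (x := u); auto.
Qed.

Lemma final_sound g s : gclosed g -> Reach g s -> exists C', rstar [s] C' /\ forall y, In y C' -> g y.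
Proof.
  intros Hg R. destruct (Reach_N g s R) as [n Hn].
  destruct (sum_reach g Hg (n + 0) [(s, n)]) as [C' [R' [G _]]].
  - intros p [Hp|[]]; subst; auto.
  - simpl; lia.
  - exists C'; auto.
Qed.

Lemma final_complete g s t : gclosed g -> RM g t s -> g t ->
  exists C', rstar [s] C' /\ (forall y, In y C' -> g y) /\ sum_mem t C'.
Proof.
  intros Hg R Gt. destruct (mark_phase g t s R [s]) as [C1 [R1 [G1 M1]]].
  - left; auto.
  - intros y [Hy|[]]; subst. eapply RM_Reach; eauto.
  - destruct (Reach_N_list g C1) as [ts [E Hts]].
    { intros; apply Reach_N; auto. }
    destruct (sum_reach g Hg (sumw snd ts) ts Hts (le_n _)) as [C' [R' [G P]]].
    exists C'. split; [|split; auto].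
    + eapply rt_trans; eauto. rewrite E in R'. auto.
    + apply P; auto. rewrite E; auto.
Qed.


Definition TN (N : term) : rterm -> Prop := fun s => taylor s N.

Lemma TN_closed N : gclosed (TN N).
Proof. intros a b R T. eapply taylor_requiv; eauto. Qed.

Lemma rstepq_of_rstep u T : rstep u T -> rstepq u T.
Proof. intros H. exists u, T. split; [apply requiv_refl|split; auto]. apply sum_eq_refl. Qed.

Lemma bag_sound s0 M N' : taylor s0 M -> forall b l1, Forall (fun t => taylor t N') l1 ->
  (forall y, In y b -> Reach (TN N') y) -> Reach (TN (Defs.app M N')) (rapp s0 (l1 ++ b)).
Proof.
  intros T0 b. induction b as [|y b IH]; intros l1 F Hb.
  - apply Rg. rewrite app_nil_r. constructor; auto.
  - apply (Reach_lift (TN N') _ (fun x => rapp s0 (l1 ++ x :: b))); auto using ctxok_bag.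
    intros x Tx. replace (l1 ++ x :: b) with ((l1 ++ [x]) ++ b) by (rewrite <- app_assoc; reflexivity).
    apply IH. apply Forall_app; split; auto.
    intros z Hz; apply Hb; right; auto.
    apply Hb; left; auto.
Qed.

Lemma F2_In_l {A B} (P : A -> B -> Prop) xs ys x : Forall2 P xs ys -> In x xs -> exists y, In y ys /\ P x y.
Proof.
  induction 1; intros Hin; [destruct Hin|]. destruct Hin as [H1|H1]; subst.
  - exists y; split; auto; left; auto.
  - destruct IHForall2 as [y' [Hy P']]; auto. exists y'; split; auto; right; auto.
Qed.

Lemma bag_complete t0 M N N' : taylor t0 M -> forall ss ys,
  Forall2 (fun s y => taylor s N /\ RM (TN N') y s) ss ys -> forall l1 l1t,
  Forall2 requiv l1 l1t -> Forall (fun t => taylor t N') l1 ->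
  RM (TN (Defs.app M N')) (rapp t0 (l1t ++ ys)) (rapp t0 (l1 ++ ss)).
Proof.
  intros T0 ss ys H. induction H as [|s y ss ys [Ts Rs'] H IH]; intros l1 l1t F2 F.
  - apply RMg. rewrite app_nil_r. constructor; auto.
    rewrite !app_nil_r. apply rq_app with l1; auto using requiv_refl, Permutation_refl.
  - apply (RM_lift (TN N') _ (fun x => rapp t0 (l1 ++ x :: ss)) y); auto using ctxok_bag.
    + intros x Tx. replace (l1 ++ x :: ss) with ((l1 ++ [x]) ++ ss) by (rewrite <- app_assoc; reflexivity).
      apply bag_sound; auto. apply Forall_app; auto.
      intros z Hz. destruct (F2_In_l _ _ _ _ H Hz) as [w [_ [_ Rw]]]. eapply RM_Reach; eauto.
    + intros x Tx Rx.
      replace (l1 ++ x :: ss) with ((l1 ++ [x]) ++ ss) by (rewrite <- app_assoc; reflexivity).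
      replace (l1t ++ y :: ys) with ((l1t ++ [y]) ++ ys) by (rewrite <- app_assoc; reflexivity).
      apply IH. apply Forall2_app; auto. apply Forall_app; auto.
Qed.

Definition Good (M N : term) :=
  (forall s, taylor s M -> Reach (TN N) s) /\
  (forall t, taylor t N -> exists s, taylor s M /\ RM (TN N) t s).

Lemma step_good M N : beta_step M N -> Good M N.
Proof.
  induction 1 as [M N|M M' H IH|M M' N H IH|M N N' H IH].
  - split.
    + intros s T. inversion T; subst. match goal with HH: taylor s0 (lam M) |- _ => inversion HH; subst end.
      apply Rs with (rsubst s b). apply rstepq_of_rstep; constructor.
      intros y Hy. apply Rg. eapply root_sound; eauto.
    + intros t T. destruct (root_complete t M N T) as [s0 [l [Ts [Fl Hin]]]].
      exists (rapp (rlam s0) l). split. constructor; auto. constructor; auto.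
      apply RMs with (rsubst s0 l) t; auto. apply rstepq_of_rstep; constructor.
      intros y Hy. apply Rg. eapply root_sound; eauto.
      apply RMg; auto. apply requiv_refl.
  - destruct IH as [IH1 IH2]. split.
    + intros s T. inversion T; subst. apply (Reach_lift (TN M') _ rlam); auto using ctxok_lam.
      intros x Tx. apply Rg. constructor; auto.
    + intros t T. inversion T; subst. match goal with HH: taylor _ M' |- _ => destruct (IH2 _ HH) as [s' [Ts R]] end.
      exists (rlam s'). split. constructor; auto.
      apply (RM_lift (TN M') _ rlam s); auto using ctxok_lam.
      intros x Tx. apply Rg. constructor; auto.
      intros x Tx Rx. apply RMg. constructor; auto. constructor; auto.
  - destruct IH as [IH1 IH2]. split.
    + intros s T. inversion T; subst. apply (Reach_lift (TN M') _ (fun s => rapp s b)); auto using ctxok_appl.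
      intros x Tx. apply Rg. constructor; auto.
    + intros t T. inversion T; subst. match goal with HH: taylor _ M' |- _ => destruct (IH2 _ HH) as [s' [Ts R]] end.
      exists (rapp s' b). split. constructor; auto.
      apply (RM_lift (TN M') _ (fun s => rapp s b) s); auto using ctxok_appl.
      intros x Tx. apply Rg. constructor; auto.
      intros x Tx Rx. apply RMg. constructor; auto.
      apply rq_app with b; auto using Permutation_refl, F2_refl.
  - destruct IH as [IH1 IH2]. split.
    + intros s T. inversion T as [| |s1 b1 M1 N1 T1 F1]; subst. apply (bag_sound s1 M N' T1 b1 []); auto.
      intros y Hy. apply IH1. rewrite Forall_forall in F1; auto.
    + intros t T. inversion T as [| |s b M1 N1 H2 H4]; subst.
      assert (exists ss, Forall2 (fun s y => taylor s N /\ RM (TN N') y s) ss b) as [ss Hss].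
      { clear - H4 IH2. induction H4 as [|y b Ty Fb IHb].
        - exists []; constructor.
        - destruct IHb as [ss Hss]. destruct (IH2 _ Ty) as [s [Ts R]].
          exists (s :: ss). constructor; auto. }
      exists (rapp s ss). split.
      * constructor; auto. clear - Hss. induction Hss; constructor; tauto.
      * apply (bag_complete s M N N' H2 ss b Hss [] []); auto.
Qed.

Lemma star_good M N : beta_star M N -> Good M N.
Proof.
  induction 1 as [M N H|M|M P N H1 IH1 H2 IH2].
  - destruct H as [_ [_ [B|S]]].
    + split.
      * intros s T. apply Rg. eapply taylor_bisim; eauto.
      * intros t T. exists t. split. eapply taylor_bisim'; eauto. apply RMg; auto. apply requiv_refl.
    + apply step_good; auto.
  - split. intros; apply Rg; auto. intros t T; exists t; split; auto. apply RMg; auto. apply requiv_refl.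
  - destruct IH1 as [S1 C1], IH2 as [S2 C2]. split.
    + intros s T. apply (Reach_graft (TN P)); auto.
    + intros t T. destruct (C2 t T) as [u [Tu Ru]]. destruct (C1 u Tu) as [s [Ts Rs']].
      exists s; split; auto. apply (RM_graft (TN P) (TN N) t u s); auto using TN_closed.
Qed.


Theorem mainTheorem5 (M N : term) :
  is001 M -> is001 N -> beta_star M N -> rstar_inf (Taylor M) (Taylor N).
Proof.
  intros _ _ Hs. destruct (star_good M N Hs) as [Sd Cp].
  set (I := {p : rterm * rsum | taylor (fst p) M /\ rstar [fst p] (snd p) /\
                                 forall y, In y (snd p) -> taylor y N}).
  exists I, (fun i => fst (proj1_sig i)), (fun i => snd (proj1_sig i)).
  split; [|split].
  - intros u. split.
    + intros T. destruct (final_sound (TN N) u (TN_closed N) (Sd u T)) as [C' [R G]].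
      exists (exist _ (u, C') (conj T (conj R G))). simpl. apply requiv_refl.
    + intros [[[s C] [T Hr]] R]. simpl in *. eapply taylor_requiv'; eauto.
  - intros u. split.
    + intros T. destruct (Cp u T) as [s [Ts Rm]].
      destruct (final_complete (TN N) s u (TN_closed N) Rm T) as [C' [R [G Mm]]].
      exists (exist _ (s, C') (conj Ts (conj R G))). simpl. auto.
    + intros [[[s C] [H1 [H2 G]]] [v [Hv R]]]. simpl in *. eapply taylor_requiv'; eauto.
  - intros [[s C] [H1 [R H2]]]. simpl. auto.
Qed.
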